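(* Let $X$ be a non-empty finite set and $\boldsymbol{\nu}$ a random probability measure on $X$ such that $(\boldsymbol{\nu}(x))_{x\in X}$ is exchangeable. Then for every $A\subset X$, $$\mathrm{Var}(\boldsymbol{\nu}(A))\le\frac{|A|}{|X|}\,\mathbb{E}\Big[\max_{x\in X}\boldsymbol{\nu}(x)\Big].$$
   Context: Exchangeable means the law of the collection is invariant under permutations of $X$. *)

(* Defs.v *)
From HB Require Import structures.
From mathcomp Require Import all_boot all_order all_algebra perm.
From mathcomp Require Import all_classical all_reals all_analysis.
Set Implicit Arguments. Unset Strict Implicit. Unset Printing Implicit Defensive.
Import Order.TTheory GRing.Theory Num.Theory.
Local Open Scope classical_set_scope.
Local Open Scope ring_scope.

(* A random family (nu x)_{x in X} of real random variables on the probability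
   space (Omega, P) is exchangeable when its joint law on R^X is invariant under
   every permutation s of X: the law of (nu (s x))_x equals the law of (nu x)_x.
   Since X is finite, the joint law is determined by its values on measurable
   rectangles prod_x B x (a pi-system generating the product sigma-algebra),
   so we state equality of laws on all such rectangles. *)
Definition exchangeable {d} {Omega : measurableType d} {R : realType}
  (P : probability Omega R) {X : finType} (nu : Omega -> X -> R) : Prop :=
  forall (s : {perm X}) (B : X -> set R),
    (forall x, measurable (B x)) ->
    P [set w | forall x, B x (nu w (s x))] = P [set w | forall x, B x (nu w x)].

(* Main.v *)
Require Import Defs.
From HB Require Import structures.
From mathcomp Require Import all_boot all_order all_algebra perm.
From mathcomp Require Import all_classical all_reals all_analysis.
From mathcomp Require Import measurable_realfun.
From mathcomp Require Import ring lra.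
Import Order.TTheory GRing.Theory Num.Theory.
Local Open Scope classical_set_scope.
Local Open Scope ring_scope.

Section pair.
Context d (Omega : measurableType d) (R : realType) (P : probability Omega R).
Context (X : finType) (nu : Omega -> X -> R).
Hypothesis nu_meas : forall x : X, measurable_fun setT (fun w => nu w x).
Hypothesis nu_exch : exchangeable P nu.

Lemma pair_prob (s : {perm X}) (x y : X) (A B : set R) : measurable A -> measurable B ->
  P [set w | A (nu w (s x)) /\ B (nu w (s y))] = P [set w | A (nu w x) /\ B (nu w y)].
Proof.
move=> mA mB.
pose C z := (if z == x then A else setT) `&` (if z == y then B else setT).
have mC : forall z, measurable (C z).
  by move=> z; rewrite /C; apply: measurableI; case: ifP.
have E : forall t : X -> X, [set w | A (nu w (t x)) /\ B (nu w (t y))] = [set w | forall z, C z (nu w (t z))].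
  move=> t; apply/seteqP; split => w /=.
    move=> [Ha Hb] z; rewrite /C; split; case: eqP => // ->//.
  move=> H; split; [have [] := H x|have [] := H y]; rewrite !eqxx //.
rewrite (E s) (E id); exact: nu_exch.
Qed.

Lemma pair_law (s : {perm X}) (x y : X) (h : (R * R)%type -> \bar R) :
  measurable_fun setT h -> (forall p, (0 <= h p)%E) ->
  (\int[P]_w h (nu w (s x), nu w (s y)) = \int[P]_w h (nu w x, nu w y))%E.
Proof.
move=> mh h0.
have m1 : measurable_fun setT (fun w => (nu w (s x), nu w (s y))).
  by apply: measurable_fun_pair.
have m2 : measurable_fun setT (fun w => (nu w x, nu w y)).
  by apply: measurable_fun_pair.
pose F1 : {mfun Omega >-> (R*R)%type} := HB.pack (fun w => (nu w (s x), nu w (s y))) (isMeasurableFun.Build _ _ _ _ _ m1).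
pose F2 : {mfun Omega >-> (R*R)%type} := HB.pack (fun w => (nu w x, nu w y)) (isMeasurableFun.Build _ _ _ _ _ m2).
have -> : (\int[P]_w h (nu w (s x), nu w (s y)) = \int[P]_w (h \o F1) w)%E by [].
have -> : (\int[P]_w h (nu w x, nu w y) = \int[P]_w (h \o F2) w)%E by [].
rewrite -!ge0_integral_distribution//.
apply: eq_measure_integral => S mS _.
apply: (measure_unique [set A `*` B | A in measurable & B in measurable] (fun _ => setT)) => //.
- exact: measurable_prod_measurableType.
- move=> _ _ [A1 mA1 [B1 mB1 <-]] [A2 mA2 [B2 mB2 <-]].
  rewrite -setXI; exists (A1 `&` A2); first exact: measurableI.
  by exists (B1 `&` B2) => //; exact: measurableI.
- by move=> _; exists setT => //; exists setT => //; rewrite setXTT.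
- by rewrite bigcup_const.
- move=> _ [A mA [B mB <-]].
  rewrite /distribution /pushforward /=.
  exact: pair_prob.
- by move=> _ /=; rewrite probability_setT ltry.
Qed.

Local Notation Ex f := (fine ('E_P[f%R])%E).

Lemma bL1 (f : Omega -> R) : measurable_fun setT f -> (forall w, `|f w| <= 1) ->
  f \in Lfun P 1.
Proof.
move=> mf fb; apply/Lfun1_integrable.
apply: (le_integrable measurableT _ _ (finite_measure_integrable_cst P 1 measurableT)).
  exact/measurable_EFinP.
by move=> w _ /=; rewrite lee_fin normr1.
Qed.

Lemma EE (f : Omega -> R) : f \in Lfun P 1 -> ('E_P[f] = (Ex f)%:E)%E.
Proof. by move=> hf; rewrite fineK// expectation_fin_num. Qed.

Lemma mbig (I : finType) (p : pred I) (F : I -> Omega -> R) (op : R -> R -> R) (idx : R) :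
  (forall f g : Omega -> R, measurable_fun setT f -> measurable_fun setT g ->
     measurable_fun setT (fun w => op (f w) (g w))) ->
  (forall i, measurable_fun setT (F i)) ->
  measurable_fun setT (fun w => \big[op/idx]_(i | p i) F i w).
Proof.
move=> mop mF.
suff H : forall r : seq I, measurable_fun setT (fun w => \big[op/idx]_(i <- r | p i) F i w) by exact: H.
elim => [|i r IH].
  under eq_fun do rewrite big_nil. exact: measurable_cst.
under eq_fun do rewrite big_cons.
case: (p i) => //; exact: mop.
Qed.

Lemma Esum (I : Type) (r : seq I) (p : pred I) (F : I -> Omega -> R) :
  (forall i, F i \in Lfun P 1) ->
  (fun w => \sum_(i <- r | p i) F i w) \in Lfun P 1 /\
  Ex (fun w => \sum_(i <- r | p i) F i w) = \sum_(i <- r | p i) Ex (F i).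
Proof.
move=> hF; elim: r => [|i r [IH1 IH2]].
  rewrite big_nil; under eq_fun do rewrite big_nil.
  by split; [exact: Lfun_cst|rewrite expectation_cst].
rewrite big_cons; under eq_fun do rewrite big_cons.
case: (p i) => //; split.
  exact: rpredD.
rewrite expectationD//= -IH2.
by rewrite (EE _ (hF i)) (EE _ IH1).
Qed.

Lemma Eperm (s : {perm X}) (x y : X) (g : (R * R)%type -> R) :
  measurable_fun setT g -> (forall p, 0 <= g p) ->
  Ex (fun w => g (nu w (s x), nu w (s y))) = Ex (fun w => g (nu w x, nu w y)).
Proof.
move=> mg g0; congr fine; rewrite !expectation.unlock.
apply: (@pair_law s x y (EFin \o g)).
  exact/measurable_EFinP.
by move=> p /=; rewrite lee_fin.
Qed.

Lemma Ele (f g : Omega -> R) : f \in Lfun P 1 -> g \in Lfun P 1 ->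
  (forall w, f w <= g w) -> Ex f <= Ex g.
Proof.
move=> hf hg fg.
have := @expectation_ge0 _ _ _ P (g \- f) (fun w => ltac:(rewrite subr_ge0; exact: fg)).
by rewrite expectationB// (EE _ hf) (EE _ hg) -EFinB lee_fin subr_ge0.
Qed.

Lemma Ege0 (f : Omega -> R) : (forall w, 0 <= f w) -> 0 <= Ex f.
Proof. by move=> f0; apply: fine_ge0; exact: expectation_ge0. Qed.


Hypothesis X_nonempty : (0 < #|X|)%N.
Hypothesis nu_ge0 : forall w x, 0 <= nu w x.
Hypothesis nu_sum1 : forall w, \sum_(x : X) nu w x = 1.

Lemma nu_le1 w x : nu w x <= 1.
Proof.
rewrite -(nu_sum1 w) (bigD1 x)//= lerDl sumr_ge0// => i _.
Qed.

Lemma L1nu x : (fun w => nu w x) \in Lfun P 1.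
Proof. by apply: bL1 => // w; rewrite ger0_norm ?nu_le1. Qed.

Lemma L1q x y : (fun w => nu w x * nu w y) \in Lfun P 1.
Proof.
apply: bL1; first exact: measurable_funM.
by move=> w; rewrite normrM !ger0_norm// mulr_ile1 ?nu_le1.
Qed.

Let m x := Ex (fun w => nu w x).
Let q x y := Ex (fun w => nu w x * nu w y).

Lemma mperm (s : {perm X}) x : m (s x) = m x.
Proof.
have E : forall z, (fun w => nu w z) = (fun w => (fun p : (R * R)%type => `|p.1|) (nu w z, nu w z)).
  by move=> z; apply/funext => w /=; rewrite ger0_norm.
rewrite /m (E (s x)) (E x); apply: (Eperm s x x (fun p : (R * R)%type => `|p.1|)) => //.
have -> : (fun p : (R * R)%type => `|p.1|) = Num.norm \o fst by [].
by apply: measurableT_comp => //; exact: measurable_fst.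
Qed.

Lemma qperm (s : {perm X}) x y : q (s x) (s y) = q x y.
Proof.
have E : forall z t, (fun w => nu w z * nu w t) =
   (fun w => (fun p : (R * R)%type => `|p.1 * p.2|) (nu w z, nu w t)).
  by move=> z t; apply/funext => w /=; rewrite ger0_norm// mulr_ge0.
rewrite /q (E (s x)) (E x); apply: (Eperm s x y (fun p : (R * R)%type => `|p.1 * p.2|)) => //.
have -> : (fun p : (R * R)%type => `|p.1 * p.2|) = Num.norm \o (fst \* snd) by [].
apply: measurableT_comp => //.
by apply: measurable_funM; [exact: measurable_fst|exact: measurable_snd].
Qed.


Lemma ES (A : {set X}) : (fun w => \sum_(x in A) nu w x) \in Lfun P 1 /\
  Ex (fun w => \sum_(x in A) nu w x) = \sum_(x in A) m x.
Proof.
have [h1 h2] := Esum _ (index_enum X) (fun x => x \in A) (fun x w => nu w x) L1nu.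
split; first exact: h1. exact: h2. Qed.

Lemma ESS (A : {set X}) :
  (fun w => \sum_(x in A) \sum_(y in A) nu w x * nu w y) \in Lfun P 1 /\
  Ex (fun w => \sum_(x in A) \sum_(y in A) nu w x * nu w y) = \sum_(x in A) \sum_(y in A) q x y.
Proof.
have inner x : (fun w => \sum_(y in A) nu w x * nu w y) \in Lfun P 1 /\
    Ex (fun w => \sum_(y in A) nu w x * nu w y) = \sum_(y in A) q x y.
  exact: (Esum _ (index_enum X) (fun y => y \in A) (fun y w => nu w x * nu w y) (L1q x)).
have [h1 h2] := Esum _ (index_enum X) (fun x => x \in A)
  (fun x w => \sum_(y in A) nu w x * nu w y) (fun x => (inner x).1).
split => //; rewrite h2; apply: eq_bigr => x _; exact: (inner x).2.
Qed.

Lemma sq_sum (A : {set X}) w : (\sum_(x in A) nu w x) * (\sum_(x in A) nu w x) =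
  \sum_(x in A) \sum_(y in A) nu w x * nu w y.
Proof. by rewrite mulr_suml; apply: eq_bigr => x _; rewrite mulr_sumr. Qed.

Lemma sumT (F : X -> R) : \sum_(x in [set: X]%SET) F x = \sum_(x : X) F x.
Proof. by apply: eq_bigl => x; rewrite inE. Qed.

Let M := fun w => \big[Num.max/0]_(x : X) nu w x.

Lemma Mmeas : measurable_fun setT M.
Proof.
apply: (@mbig X xpredT (fun x w => nu w x) Num.max 0) => //.
by move=> f g mf mg; exact: measurable_maxr.
Qed.

Lemma nu_leM w x : nu w x <= M w.
Proof. exact: le_bigmax. Qed.

Lemma M_le1 w : M w <= 1.
Proof. by apply: bigmax_le => // i _; exact: nu_le1. Qed.

Lemma M_ge0 w : 0 <= M w.
Proof.
case/card_gt0P: X_nonempty => x0 _.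
exact: le_trans (nu_ge0 w x0) (nu_leM w x0).
Qed.

Lemma L1M : M \in Lfun P 1.
Proof. by apply: bL1; [exact: Mmeas|move=> w; rewrite ger0_norm ?M_ge0 ?M_le1]. Qed.


Lemma real_ineq (N K a b c EM : R) : 1 <= N -> 0 <= K -> K <= N -> 0 <= a -> 0 <= b ->
  c * N = 1 -> N * (N * b + (a - b)) = 1 -> N * a <= EM ->
  K * (K * b + (a - b)) - K * c * (K * c) <= K / N * EM.
Proof.
move=> N1 K0 KN a0 b0 cN hN hM.
have N0 : 0 < N by apply: lt_le_trans N1.
have h1 : K / N * (N * a) <= K / N * EM.
  by apply: ler_wpM2l => //; apply: divr_ge0 => //; exact: ltW.
have h2 : K / N * (N * a) = K * a by field; rewrite gt_eqF.
have key : K * (K - 1) * b * (N * N) <= (K * c) * (K * c) * (N * N).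
  have e : (K * c) * (K * c) * (N * N) = K * K.
    have -> : (K * c) * (K * c) * (N * N) = K * K * ((c * N) * (c * N)) by ring.
    by rewrite cN !mulr1.
  rewrite e.
  have Na : 0 <= N * a by apply: mulr_ge0 => //; exact: ltW.
  have hb : N * (N - 1) * b <= 1 by nra.
  have h3 : (K - 1) * N * b <= K * (N - 1) * b by nra.
  have KN0 : 0 <= K * N by apply: mulr_ge0 => //; exact: ltW.
  have h4 := ler_wpM2l KN0 h3.
  have h5 := ler_wpM2l (mulr_ge0 K0 K0) hb.
  have -> : K * (K - 1) * b * (N * N) = K * N * ((K - 1) * N * b) by ring.
  apply: (le_trans h4).
  have -> : K * N * (K * (N - 1) * b) = K * K * (N * (N - 1) * b) by ring.
  by rewrite mulr1 in h5.
have key2 : K * (K - 1) * b <= (K * c) * (K * c).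
  by rewrite -(ler_pM2r (mulr_gt0 N0 N0)).
nra.
Qed.

Lemma main (A : {set X}) :
  ('V_P[(fun w => \sum_(x in A) nu w x)%R]
    <= ((#|A|%:R / #|X|%:R : R)%:E
        * 'E_P[(fun w => \big[Num.max/0]_(x : X) nu w x)%R]))%E.
Proof.
case/card_gt0P: (X_nonempty) => x0 _.
set c := m x0.
have mc x : m x = c by rewrite /c -(mperm (tperm x x0) x) tpermL.
set a := q x0 x0.
have qa x : q x x = a by rewrite /a -(qperm (tperm x x0) x x) tpermL.
set b := if [pick xy : X * X | xy.1 != xy.2] is Some xy then q xy.1 xy.2 else 0.
have qb x y : x != y -> q x y = b.
  move=> xy; rewrite /b; case: pickP => [[x' y'] /= hxy|/(_ (x, y))/=]; last by rewrite xy.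
  set z := tperm x x' y.
  have zx' : z != x'.
    by rewrite /z -{2}(tpermL x x') (inj_eq (@perm_inj _ (tperm x x'))) eq_sym.
  pose s := (tperm x x' * tperm z y')%g.
  have sx : s x = x' by rewrite permM tpermL tpermD // eq_sym.
  have sy : s y = y' by rewrite permM -/z tpermL.
  by rewrite -(qperm s x y) sx sy.
have qf x y : q x y = b + (if y == x then a - b else 0).
  case: eqP => [->|/eqP ne]; first by rewrite qa addrC subrK.
  by rewrite addr0 qb // eq_sym.
have sumq (B : {set X}) : \sum_(x in B) \sum_(y in B) q x y = #|B|%:R * (#|B|%:R * b + (a - b)).
  rewrite (eq_bigr (fun _ => #|B|%:R * b + (a - b))); first by rewrite sumr_const [RHS]mulr_natl.
  move=> x xB.
  under eq_bigr do rewrite qf.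
  rewrite big_split /= sumr_const (bigD1 x) //= eqxx big1 ?addr0 ?mulr_natl //.
  by move=> y /andP[_ /negbTE ->].
have summ (B : {set X}) : \sum_(x in B) m x = #|B|%:R * c.
  by under eq_bigr do rewrite mc; rewrite sumr_const mulr_natl.
have h1 : #|X|%:R * c = 1.
  have [_ e] := ES [set: X]%SET.
  have e' : (fun w => \sum_(x in [set: X]%SET) nu w x) = cst 1.
    by apply/funext => w; rewrite sumT nu_sum1.
  by rewrite e' expectation_cst /= summ cardsT in e.
have h2 : #|X|%:R * (#|X|%:R * b + (a - b)) = 1.
  have [_ e] := ESS [set: X]%SET.
  have e' : (fun w => \sum_(x in [set: X]%SET) \sum_(y in [set: X]%SET) nu w x * nu w y) = cst 1.
    by apply/funext => w; rewrite -sq_sum sumT nu_sum1 mulr1.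
  by rewrite e' expectation_cst /= sumq cardsT in e.
have hM : #|X|%:R * a <= Ex M.
  have [L e] := Esum _ (index_enum X) (fun x => x \in [set: X]%SET) (fun x w => nu w x * nu w x) (fun x => L1q x x).
  have <- : \sum_(x in [set: X]%SET) q x x = #|X|%:R * a.
    by under eq_bigr do rewrite qa; rewrite sumr_const mulr_natl cardsT.
  rewrite -e; apply: Ele => // [|w]; first exact: L1M.
  apply: le_trans (_ : \sum_(x in [set: X]%SET) M w * nu w x <= _).
    by apply: ler_sum => x _; apply: ler_wpM2r => //; exact: nu_leM.
  by rewrite -mulr_sumr sumT nu_sum1 mulr1.
have [LS eS] := ES A.
have [LSS eSS] := ESS A.
have eqf : ((fun w => \sum_(x in A) nu w x) * (fun w => \sum_(x in A) nu w x))%R =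
    (fun w => \sum_(x in A) \sum_(y in A) nu w x * nu w y).
  by apply/funext => w /=; rewrite -sq_sum.
have a0 : 0 <= a by apply: Ege0 => w; apply: mulr_ge0.
have b0 : 0 <= b.
  rewrite /b; case: pickP => [[x' y'] _|_] //=.
  by apply: Ege0 => w; apply: mulr_ge0.
rewrite /variance covarianceE // ?eqf // (EE _ LSS) (EE _ LS) (EE _ L1M).
rewrite -!EFinM -EFinB lee_fin eSS eS sumq summ.
apply: real_ineq => //.
- by rewrite ler1n.
- by rewrite ler_nat max_card.
by rewrite mulrC.
Qed.
End pair.

Theorem lemma6p3 (d : measure_display) (Omega : measurableType d) (R : realType)
  (P : probability Omega R) (X : finType) (nu : Omega -> X -> R)
  (X_nonempty : (0 < #|X|)%N)
  (nu_meas : forall x : X, measurable_fun setT (fun w => nu w x))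
  (nu_ge0 : forall w x, 0 <= nu w x)
  (nu_sum1 : forall w, \sum_(x : X) nu w x = 1)
  (nu_exch : exchangeable P nu)
  (A : {set X}) :
  ('V_P[(fun w => \sum_(x in A) nu w x)%R]
    <= ((#|A|%:R / #|X|%:R : R)%:E
        * 'E_P[(fun w => \big[Num.max/0]_(x : X) nu w x)%R]))%E.
Proof.
by apply: main.
Qed.
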